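(* For every integer $n\ge2$, the Mobius ladder $M_{2n}$ admits no extended irregular dominating set.
   Context: For $n\ge2$, the Mobius ladder $M_{2n}$ has vertex set $\{x_1,\dots,x_{2n}\}$ and edge set $\{\{x_i,x_{i+1}\}:1\le i\le 2n\}\cup\{\{x_i,x_{i+n}\}:1\le i\le n\}$, subscripts modulo $2n$. In a finite simple graph $\Gamma=(V,E)$ with distance $d$, a vertex $v$ carrying a non-negative integer label $\ell$ dominates (covers) exactly the vertices $u$ with $d(u,v)=\ell$; a vertex labeled $0$ dominates only itself. An extended irregular dominating set is a set $S\subseteq V$ with a labeling $\lambda:S\to\mathbb{Z}_{\ge0}$ with distinct labels on distinct vertices, such that every vertex of $V$ is dominated by some vertex of $S$; it is assumed that some vertex of $S$ has label $0$. *)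

(* Defs.v *)
From mathcomp Require Import all_boot.
Set Implicit Arguments. Unset Strict Implicit. Unset Printing Implicit Defensive.

(* Mobius ladder M_{2n}: vertex x_{i+1} is represented by i : 'I_(2n)
   (indices 0..2n-1, arithmetic modulo 2n).  Edges: {x_i, x_{i+1}} and
   {x_i, x_{i+n}} (subscripts mod 2n). *)
Definition mobius_adj (n : nat) : rel 'I_(2 * n) :=
  fun i j =>
    [|| (j : nat) == (i + 1) %% (2 * n),
        (i : nat) == (j + 1) %% (2 * n)
      | (j : nat) == (i + n) %% (2 * n)].

Definition walk_len (T : finType) (adj : rel T) (u v : T) (k : nat) : bool :=
  [exists s : k.-tuple T, path adj u s && (last u s == v)].

Definition dist_is (T : finType) (adj : rel T) (u v : T) (k : nat) : Prop :=
  walk_len adj u v k /\ forall m, m < k -> ~~ walk_len adj u v m.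

(* Extended irregular dominating set: S with labeling lam (only its values on
   S matter), distinct labels on distinct vertices of S, some label 0, and
   every vertex u is dominated: d(u,v) = lam v for some v in S. *)
Definition ext_irr_dom (T : finType) (adj : rel T) (S : {set T}) (lam : T -> nat)
  : Prop :=
  {in S &, injective lam} /\
  (exists2 v, v \in S & lam v = 0) /\
  (forall u : T, exists2 v, v \in S & dist_is adj u v (lam v)).

(* Main.v *)
Require Import Defs.
From mathcomp Require Import all_boot zify.
Set Implicit Arguments. Unset Strict Implicit. Unset Printing Implicit Defensive.

Lemma modN2 N a : a < 2 * N -> a %% N = if a < N then a else a - N.
Proof.
move=> h; case: ifP => h2; first by rewrite modn_small.
have h3 : N <= a by rewrite leqNgt h2.
by rewrite -{1}(subnK h3) modnDr modn_small //; lia.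
Qed.

Definition cc n t := if t <= n then t else 2*n - t.
Definition dd n t := if 2 * cc n t <= n.+1 then cc n t else n.+1 - cc n t.
Definition dl n (u v : 'I_(2*n)) := dd n ((2*n + v - u) %% (2*n)).

Ltac split_ifs := repeat match goal with
 | |- context [if ?b then _ else _] => let E := fresh "E" in destruct b eqn:E
 end.

Ltac bnd := repeat match goal with
 | x : 'I_(2 * _) |- _ => have := ltn_ord x; move: x => /= x
 end.

Ltac crunch := rewrite /dl /dd /cc; rewrite ?modN2; try lia; split_ifs; lia.


Lemma dd_t1 n t : 2 <= n -> t < 2 * n -> dd n ((t + 1) %% (2*n)) <= (dd n t).+1.
Proof. move=> hn ht; crunch. Qed.
Lemma dd_t2 n t : 2 <= n -> t < 2 * n -> dd n ((t + (2*n-1)) %% (2*n)) <= (dd n t).+1.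
Proof. move=> hn ht; crunch. Qed.
Lemma dd_t3 n t : 2 <= n -> t < 2 * n -> dd n ((t + n) %% (2*n)) <= (dd n t).+1.
Proof. move=> hn ht; crunch. Qed.

Lemma md_lt n a : 2 <= n -> a %% (2 * n) < 2 * n.
Proof. move=> hn; apply: ltn_pmod; lia. Qed.

Ltac mods := rewrite ?modN2; try lia; split_ifs; lia.

Lemma adj_tri n (u x y : 'I_(2*n)) : 2 <= n -> @mobius_adj n x y ->
  dl u y <= (dl u x).+1.
Proof.
move=> hn; rewrite /mobius_adj /dl.
have hx := ltn_ord x; have hy := ltn_ord y; have hu := ltn_ord u.
move: (val x) (val y) (val u) hx hy hu => {x y u} x y u hx hy hu.
move=> /orP[/eqP h|/orP[/eqP h|/eqP h]].
- have -> : (2 * n + y - u) %% (2 * n) = ((2*n + x - u) %% (2*n) + 1) %% (2*n).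
    by move: h; mods.
  by apply: dd_t1 => //; apply: md_lt.
- have -> : (2 * n + y - u) %% (2 * n) = ((2*n + x - u) %% (2*n) + (2*n-1)) %% (2*n).
    by move: h; mods.
  by apply: dd_t2 => //; apply: md_lt.
- have -> : (2 * n + y - u) %% (2 * n) = ((2*n + x - u) %% (2*n) + n) %% (2*n).
    by move: h; mods.
  by apply: dd_t3 => //; apply: md_lt.
Qed.

Lemma path_bound n (u : 'I_(2*n)) (s : seq 'I_(2*n)) x : 2 <= n ->
  path (@mobius_adj n) x s -> dl u (last x s) <= dl u x + size s.
Proof.
move=> hn; elim: s x => [|y s IH] x /=; first by rewrite addn0.
move=> /andP[hxy hp]; have := IH y hp; have := adj_tri u hn hxy; lia.
Qed.

Lemma walk_lb n (u v : 'I_(2*n)) k : 2 <= n ->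
  walk_len (@mobius_adj n) u v k -> dl u v <= k.
Proof.
move=> hn /existsP[s /andP[hp /eqP hl]].
have := path_bound u hn hp; rewrite hl size_tuple.
suff -> : dl u u = 0 by [].
rewrite /dl; have hu := ltn_ord u; crunch.
Qed.

Lemma dl0 n (u v : 'I_(2*n)) : 2 <= n -> dl u v = 0 -> u = v.
Proof.
move=> hn; rewrite /dl => h; apply: val_inj => /=; move: h.
have hv := ltn_ord v; have hu := ltn_ord u; crunch.
Qed.

Lemma dl_refl n (u : 'I_(2*n)) : 2 <= n -> dl u u = 0.
Proof. move=> hn; have hu := ltn_ord u; crunch. Qed.

Definition mkI n (hN : 0 < 2 * n) a : 'I_(2*n) := Ordinal (ltn_pmod a hN).

Lemma dd_step n t k : 2 <= n -> t < 2 * n -> dd n t = k.+1 ->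
  dd n ((t + (2*n-1)) %% (2*n)) = k \/ dd n ((t + 1) %% (2*n)) = k \/
  dd n ((t + n) %% (2*n)) = k.
Proof.
move=> hn ht h.
have [h1|h1] := boolP ((1 <= t <= n) && (2 * t <= n.+1)).
  left; move: h h1; crunch.
have [h2|h2] := boolP ((n < t) && (2 * (2*n - t) <= n.+1)).
  right; left; move: h h1 h2; crunch.
right; right; move: h h1 h2; crunch.
Qed.

Lemma step n (hN : 0 < 2 * n) (u v : 'I_(2*n)) k : 2 <= n -> dl u v = k.+1 ->
  exists x, @mobius_adj n u x && (dl x v == k).
Proof.
move=> hn h.
have hv := ltn_ord v; have hu := ltn_ord u.
have ht : (2*n + v - u) %% (2*n) < 2 * n by apply: ltn_pmod.
have [h1|[h2|h3]] := dd_step hn ht h.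
- exists (mkI hN (u + 1)); apply/andP; split.
    by rewrite /mobius_adj /= eqxx.
  rewrite /dl /= -h1; apply/eqP; apply: f_equal; mods.
- exists (mkI hN (u + (2*n - 1))); rewrite /dl /= -h2.
  apply/andP; split; last by apply/eqP; apply: f_equal; mods.
  rewrite /mobius_adj /=.
  apply/orP; right; apply/orP; left; apply/eqP; mods.
- exists (mkI hN (u + n)); apply/andP; split.
    by rewrite /mobius_adj /= eqxx !orbT.
  rewrite /dl /= -h3; apply/eqP; apply: f_equal; mods.
Qed.

Lemma walk_ex n (u v : 'I_(2*n)) k : 2 <= n -> dl u v = k ->
  walk_len (@mobius_adj n) u v k.
Proof.
move=> hn; have hN : 0 < 2 * n by lia.
elim: k u => [|k IH] u h.
  rewrite (dl0 hn h); apply/existsP; exists [tuple]; by rewrite /= eqxx.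
have [x /andP[hx /eqP hd]] := step hN hn h.
have /existsP[s /andP[hp hl]] := IH x hd.
apply/existsP; exists [tuple of x :: s]; by rewrite /= hx hp hl.
Qed.

Lemma dist_dl n (u v : 'I_(2*n)) k : 2 <= n ->
  dist_is (@mobius_adj n) u v k -> k = dl u v.
Proof.
move=> hn [hw hm]; apply/eqP; rewrite eqn_leq; apply/andP; split; last first.
  exact: walk_lb hw.
rewrite leqNgt; apply/negP => hlt.
by have := hm _ hlt; rewrite (walk_ex hn (erefl _)).
Qed.

Lemma dd_le n t : 2 <= n -> t < 2 * n -> dd n t <= n.
Proof. move=> hn ht; crunch. Qed.

Lemma dd_partner n t l : 2 <= n -> t < 2 * n -> dd n t = l -> 1 <= l ->
  dd n ((t + (n - 1)) %% (2*n)) = l \/ dd n ((t + n.+1) %% (2*n)) = l.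
Proof.
move=> hn ht h hl.
have [h1|h1] := leqP t n.
  left; move: h h1; crunch.
right; move: h h1; crunch.
Qed.

Lemma dd_star n : 2 <= n -> 1 <= dd n (n - 1).
Proof. move=> hn; crunch. Qed.

Definition sx n (hN : 0 < 2 * n) (x : 'I_(2*n)) := mkI hN (x + n.+1).
Definition sx' n (hN : 0 < 2 * n) (x : 'I_(2*n)) := mkI hN (x + (n - 1)).

Lemma partner n (hN : 0 < 2 * n) (x v : 'I_(2*n)) : 2 <= n -> 1 <= dl x v ->
  dl (sx hN x) v = dl x v \/ dl (sx' hN x) v = dl x v.
Proof.
move=> hn hl.
have hv := ltn_ord v; have hx := ltn_ord x.
have ht : (2*n + v - x) %% (2*n) < 2 * n by apply: ltn_pmod.
have [h|h] := dd_partner hn ht (erefl _) hl.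
  left; rewrite /dl /= -h; apply: f_equal; mods.
right; rewrite /dl /= -h; apply: f_equal; mods.
Qed.

Lemma star1 n (hN : 0 < 2 * n) (x : 'I_(2*n)) : 2 <= n ->
  dl (sx hN x) x = dd n (n - 1).
Proof. move=> hn; have hx := ltn_ord x; rewrite /dl /=; apply: f_equal; mods. Qed.

Lemma star2 n (hN : 0 < 2 * n) (x : 'I_(2*n)) : 2 <= n ->
  dl (sx' hN x) x = dd n (n - 1).
Proof.
move=> hn; have hx := ltn_ord x; rewrite /dl /=.
have -> : (2 * n + x - (x + (n - 1)) %% (2 * n)) %% (2 * n) = n.+1 by mods.
rewrite /dd /cc; split_ifs; lia.
Qed.

Definition gv n (hN : 0 < 2 * n) (v u : 'I_(2*n)) := mkI hN (2 * n + v - u).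

Lemma gv_inv n (hN : 0 < 2 * n) (v : 'I_(2*n)) : involutive (gv hN v).
Proof.
move=> u; apply: val_inj => /=; have hv := ltn_ord v; have hu := ltn_ord u.
rewrite ?modN2; try lia; split_ifs; lia.
Qed.

Lemma card_sphere n (hN : 0 < 2 * n) (v : 'I_(2*n)) l :
  #|[set u | dl u v == l]| = #|[set t : 'I_(2*n) | dd n t == l]|.
Proof.
have -> : [set u | dl u v == l] = gv hN v @^-1: [set t : 'I_(2*n) | dd n t == l].
  by apply/setP => u; rewrite !inE.
by rewrite card_preimset //; apply: inv_inj; apply: gv_inv.
Qed.

Lemma sum_part (T : finType) (f : T -> nat) K : (forall x, f x < K) ->
  \sum_(l < K) #|[set x | f x == l]| = #|T|.
Proof.
move=> hf.
rewrite -sum1_card (partition_big (fun x => Ordinal (hf x)) xpredT) //=.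
apply: eq_bigr => l _; rewrite -sum1_card; apply: eq_bigl => x.
by rewrite inE -val_eqE.
Qed.

Theorem theorem3p6 (n : nat) (hn : 2 <= n) :
  ~ exists (S : {set 'I_(2 * n)}) (lam : 'I_(2 * n) -> nat),
      ext_irr_dom (@mobius_adj n) S lam.
Proof.
move=> [S [lam [inj [_ hcov]]]].
have hN : 0 < 2 * n by lia.
have cov' : forall u, exists v, (v \in S) && (dl u v == lam v).
  move=> u; have [v hv hd] := hcov u; exists v.
  by rewrite hv /= (dist_dl hn hd) eqxx.
pose cov u := odflt u [pick v in S | dl u v == lam v].
have covP : forall u, cov u \in S /\ dl u (cov u) = lam (cov u).
  move=> u; rewrite /cov; case: pickP => [v /andP[h1 /eqP h2]|h] //=.
  have [v /andP[h1 h2]] := cov' u; by have := h v; rewrite h1 h2.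
pose L u := lam (cov u).
have hLle : forall u, L u < n.+1.
  move=> u; rewrite /L -(covP u).2 ltnS; apply: dd_le => //; exact: ltn_pmod.
have hsub : forall u0, [set u | L u == L u0] \subset [set u | dl u (cov u0) == L u0].
  move=> u0; apply/subsetP => w; rewrite !inE => /eqP h.
  have e : cov w = cov u0.
    by apply: inj; [exact (covP w).1 | exact (covP u0).1 | exact h].
  rewrite -e; apply/eqP; rewrite (covP w).2; exact h.
have hle : forall l, #|[set u | L u == l]| <= #|[set t : 'I_(2*n) | dd n t == l]|.
  move=> l; case: (posnP #|[set u | L u == l]|) => [-> //|/card_gt0P [u0]].
  rewrite inE => /eqP hu0; rewrite -(card_sphere hN (cov u0)) -hu0.
  exact: subset_leq_card (hsub u0).
have hsA : \sum_(l < n.+1) #|[set u | L u == l]| = 2 * n by rewrite (sum_part hLle) card_ord.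
have hsB : \sum_(l < n.+1) #|[set t : 'I_(2*n) | dd n t == l]| = 2 * n.
  rewrite sum_part ?card_ord // => t; rewrite ltnS; apply: dd_le => //; exact: ltn_ord.
have heq : forall l, l < n.+1 ->
    #|[set u | L u == l]| = #|[set t : 'I_(2*n) | dd n t == l]|.
  move=> l hl.
  have h0 : \sum_(i < n.+1) (#|[set t : 'I_(2*n) | dd n t == i]| - #|[set u | L u == i]|) = 0.
    by rewrite sumnB ?hsA ?hsB ?subnn // => i _; exact: hle.
  have := hle l; move: h0; rewrite (bigD1 (Ordinal hl)) //= => /eqP.
  rewrite addn_eq0 => /andP[/eqP h1 _] h2; lia.
have hsph : forall u0 y, dl y (cov u0) = L u0 -> L y = L u0.
  move=> u0 y hy.
  have e := heq _ (hLle u0); rewrite -(card_sphere hN (cov u0)) in e.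
  have /(subset_cardP e) hEq := hsub u0.
  have : y \in [set u | dl u (cov u0) == L u0] by rewrite inE hy.
  by rewrite -hEq inE => /eqP.
set ls := dd n (n - 1).
have hls : ls < n.+1 by rewrite ltnS; apply: dd_le => //; lia.
have [u0 hu0] : exists u0, L u0 = ls.
  have : 0 < #|[set u | L u == ls]|.
    rewrite (heq _ hls); apply/card_gt0P.
    have ht : n - 1 < 2 * n by lia.
    by exists (Ordinal ht); rewrite inE.
  by move/card_gt0P => [u1]; rewrite inE => /eqP h; exists u1.
have hxS := (covP u0).1.
set x := cov u0 in hxS.
have [hvS hv] := covP x.
set v := cov x in hvS hv.
have hne : L x <> ls.
  move=> h.
  have e : v = x by apply: inj => //; rewrite -/(L x) h -hu0.
  have := hv; rewrite e dl_refl // => h0.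
  have := dd_star hn; rewrite -/ls -hu0 /L -/x -h0; lia.
have hpos : 1 <= dl x v.
  rewrite lt0n; apply/eqP => h0; have e := dl0 hn h0.
  apply: hne; rewrite /L -/v -e -hu0.
  done.
have [hy|hy] := partner hN hn hpos.
- have h1 : L (sx hN x) = L x by apply: hsph; rewrite hy; exact hv.
  have h2 : L (sx hN x) = L u0 by apply: hsph; rewrite -/x star1 // hu0.
  by apply: hne; rewrite -h1 h2 hu0.
- have h1 : L (sx' hN x) = L x by apply: hsph; rewrite hy; exact hv.
  have h2 : L (sx' hN x) = L u0 by apply: hsph; rewrite -/x star2 // hu0.
  by apply: hne; rewrite -h1 h2 hu0.
Qed.
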